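(* Let $a>0$, $p>1$, and let $\phi\in C^1((0,a])\cap C^0([0,a])$ satisfy $\phi(0)=0$, $\phi(t)>0$ for $t\in(0,a]$, and $c_1t^{p-1+\delta}\le\phi(t)\le c_2t^{p-1+\delta}$ for all $t\in(0,a]$, for some constants $c_1,c_2,\delta>0$. Define \[ \eta_a(t)=\frac{\phi(t)^{-\frac1{p-1}}}{\int_t^a\phi(\sigma)^{-\frac1{p-1}}\,d\sigma},\quad t\in(0,a). \] Then for all $t\in(0,a)$, \[ \left(\frac{c_1}{c_2}\right)^{\frac1{p-1}}\frac{\delta}{p-1}\,\frac{a^{\delta/(p-1)}}{t\,(a^{\delta/(p-1)}-t^{\delta/(p-1)})}\le\eta_a(t)\le\left(\frac{c_2}{c_1}\right)^{\frac1{p-1}}\frac{\delta}{p-1}\,\frac{a^{\delta/(p-1)}}{t\,(a^{\delta/(p-1)}-t^{\delta/(p-1)})}. \] *)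

(* Defs.v *)
From Stdlib Require Import Reals.
From Coquelicot Require Import Coquelicot.
Open Scope R_scope.

Definition cont_on_closed (phi : R -> R) (a : R) : Prop :=
  forall t, 0 <= t <= a ->
    filterlim phi (within (fun s => 0 <= s <= a) (locally t)) (locally (phi t)).

Definition C1_on_half_open (phi : R -> R) (a : R) : Prop :=
  exists dphi : R -> R,
    (forall t, 0 < t <= a ->
       filterlim (fun s => (phi s - phi t) / (s - t))
         (within (fun s => 0 < s <= a /\ s <> t) (locally t)) (locally (dphi t)))
    /\ (forall t, 0 < t <= a ->
       filterlim dphi (within (fun s => 0 < s <= a) (locally t)) (locally (dphi t))).

Definition eta (phi : R -> R) (p a t : R) : R :=
  Rpower (phi t) (- / (p - 1)) /
  RInt (fun s => Rpower (phi s) (- / (p - 1))) t a.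

(* Main.v *)
Require Import Defs.
From Stdlib Require Import Reals Lra.
From Coquelicot Require Import Coquelicot.
Open Scope R_scope.

Definition clamp (t a s : R) := Rmax t (Rmin s a).

Lemma clamp_lip t a s x : t <= a -> Rabs (clamp t a s - clamp t a x) <= Rabs (s - x).
Proof.
  intros H; unfold clamp, Rmax, Rmin.
  repeat destruct Rle_dec; unfold Rabs; repeat destruct Rcase_abs; lra.
Qed.

Lemma clamp_in t a s : t <= a -> t <= clamp t a s <= a.
Proof. intros H; unfold clamp, Rmax, Rmin; repeat destruct Rle_dec; lra. Qed.

Lemma clamp_cont t a x : t <= a -> continuous (clamp t a) x.
Proof.
  intros H. apply filterlim_locally. intros eps. exists eps. intros y Hy.
  change (Rabs (clamp t a y - clamp t a x) < eps).
  change (Rabs (y - x) < eps) in Hy.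
  eapply Rle_lt_trans; [apply clamp_lip; auto| exact Hy].
Qed.

Lemma rpow_cont (q y : R) : 0 < y -> continuous (fun z => Rpower z q) y.
Proof.
  intros Hy. apply (ex_derive_continuous (K:=R_AbsRing) (V:=R_NormedModule)). exists (q * Rpower y (q - 1)).
  apply is_derive_Reals. apply derivable_pt_lim_power; auto.
Qed.

Lemma comp_cont (phi : R -> R) t a x : 0 <= t <= a ->
  (forall s, 0 <= s <= a -> filterlim phi (within (fun s => 0 <= s <= a) (locally s)) (locally (phi s))) ->
  continuous (fun s => phi (clamp t a s)) x.
Proof.
  intros Ht Hc. unfold continuous.
  eapply filterlim_comp; [|apply Hc; pose proof (clamp_in t a x); lra].
  intros P HP. unfold within in HP.
  pose proof (clamp_cont t a x (proj2 Ht) _ HP) as H.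
  unfold filtermap in *. eapply filter_imp; [|exact H].
  intros s Hs. apply Hs. pose proof (clamp_in t a s); lra.
Qed.

Lemma rpow_int e t a : 0 < e -> 0 < t <= a ->
  is_RInt (fun s => Rpower s (-(1+e))) t a ((Rpower a (-e) - Rpower t (-e)) / (-e)).
Proof.
  intros He Ht.
  assert (E: (Rpower a (-e) - Rpower t (-e)) / (-e) = minus ((/ -e) * Rpower a (-e)) ((/ -e) * Rpower t (-e))).
  { unfold minus, plus, opp; simpl. field. lra. }
  rewrite E. apply (is_RInt_derive (V:=R_CompleteNormedModule) (fun s => (/ -e) * Rpower s (-e))).
  - intros x Hx. rewrite Rmin_left in Hx by lra. rewrite Rmax_right in Hx by lra.
    replace (Rpower x (-(1+e))) with ((/ -e) * (-e * Rpower x (-e - 1))).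
    2:{ replace (-e-1) with (-(1+e)) by ring. field. lra. }
    apply is_derive_scal. apply is_derive_Reals. apply derivable_pt_lim_power. lra.
  - intros x Hx. rewrite Rmin_left in Hx by lra. rewrite Rmax_right in Hx by lra.
    apply rpow_cont. lra.
Qed.

Lemma pw_bound (c x q k s : R) : 0 < c -> 0 < s -> 0 < q -> 0 < x ->
  c * Rpower s k <= x ->
  Rpower x (-q) <= / Rpower c q * Rpower s (-(k*q)).
Proof.
  intros Hc Hs Hq Hx H.
  rewrite !Rpower_Ropp, <- Rinv_mult, <- Rpower_mult, Rpower_mult_distr.
  - apply Rinv_le_contravar.
    + apply exp_pos.
    + apply Rle_Rpower_l; [lra|]. split; [|exact H]. apply Rmult_lt_0_compat; [lra|apply exp_pos].
  - exact Hc.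
  - apply exp_pos.
Qed.

Lemma pw_bound2 (c x q k s : R) : 0 < c -> 0 < s -> 0 < q -> 0 < x ->
  x <= c * Rpower s k ->
  / Rpower c q * Rpower s (-(k*q)) <= Rpower x (-q).
Proof.
  intros Hc Hs Hq Hx H.
  rewrite !Rpower_Ropp, <- Rinv_mult, <- Rpower_mult, Rpower_mult_distr.
  - apply Rinv_le_contravar.
    + apply exp_pos.
    + apply Rle_Rpower_l; [lra|]. split; [exact Hx|exact H].
  - exact Hc.
  - apply exp_pos.
Qed.

Lemma div_le (a b c d : R) : 0 <= a <= c -> 0 < d <= b -> a / b <= c / d.
Proof.
  intros H1 H2. unfold Rdiv. apply Rmult_le_compat; try lra.
  - left. apply Rinv_0_lt_compat; lra.
  - apply Rinv_le_contravar; lra.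
Qed.

Lemma Rpower_inv_base x y : 0 < x -> Rpower (/ x) y = / Rpower x y.
Proof. intros H. unfold Rpower. rewrite ln_Rinv by auto. rewrite <- exp_Ropp. f_equal; ring. Qed.

Theorem lemma2p2 (a p : R) (phi : R -> R) (c1 c2 delta : R) :
  0 < a -> 1 < p ->
  C1_on_half_open phi a -> cont_on_closed phi a ->
  phi 0 = 0 ->
  (forall t, 0 < t <= a -> 0 < phi t) ->
  0 < c1 -> 0 < c2 -> 0 < delta ->
  (forall t, 0 < t <= a ->
     c1 * Rpower t (p - 1 + delta) <= phi t /\ phi t <= c2 * Rpower t (p - 1 + delta)) ->
  forall t, 0 < t < a ->
    Rpower (c1 / c2) (/ (p - 1)) * (delta / (p - 1)) *
      (Rpower a (delta / (p - 1)) /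
       (t * (Rpower a (delta / (p - 1)) - Rpower t (delta / (p - 1)))))
    <= eta phi p a t
    /\ eta phi p a t <=
    Rpower (c2 / c1) (/ (p - 1)) * (delta / (p - 1)) *
      (Rpower a (delta / (p - 1)) /
       (t * (Rpower a (delta / (p - 1)) - Rpower t (delta / (p - 1))))).
Proof.
  intros Ha Hp _ Hcont H0 Hpos Hc1 Hc2 Hd Hb t Ht.
  unfold eta.
  set (q := / (p - 1)). set (e := delta / (p - 1)).
  assert (Hq : 0 < q) by (apply Rinv_0_lt_compat; lra).
  assert (He : 0 < e) by (unfold e; apply Rdiv_lt_0_compat; lra).
  assert (Hkq : (p - 1 + delta) * q = 1 + e) by (unfold q, e; field; lra).
  set (psi := fun s => Rpower (phi s) (-q)).
  set (g := fun s => Rpower s (-(1+e))).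
  set (U := / Rpower c1 q). set (L := / Rpower c2 q).
  assert (Hup : forall s, 0 < s <= a -> psi s <= U * g s).
  { intros s Hs. unfold psi, U, g. rewrite <- Hkq. apply pw_bound; try lra.
    apply Hpos; lra. apply Hb; lra. }
  assert (Hlo : forall s, 0 < s <= a -> L * g s <= psi s).
  { intros s Hs. unfold psi, L, g. rewrite <- Hkq. apply pw_bound2; try lra.
    apply Hpos; lra. apply Hb; lra. }
  assert (exI : ex_RInt psi t a).
  { apply (ex_RInt_ext (fun s => Rpower (phi (clamp t a s)) (-q))).
    - intros x Hx. rewrite Rmin_left in Hx by lra. rewrite Rmax_right in Hx by lra.
      unfold psi, clamp. rewrite Rmin_left by lra. rewrite Rmax_right by lra. reflexivity.
    - apply (ex_RInt_continuous (V:=R_CompleteNormedModule)). intros z Hz.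
      apply (continuous_comp (fun s => phi (clamp t a s)) (fun y => Rpower y (-q))).
      + apply comp_cont; [lra|exact Hcont].
      + apply rpow_cont. apply Hpos. pose proof (clamp_in t a z); lra. }
  set (J := (Rpower a (-e) - Rpower t (-e)) / (-e)).
  assert (HJ : is_RInt g t a J) by (apply rpow_int; lra).
  assert (HU : is_RInt (fun s => U * g s) t a (U * J)) by (exact (is_RInt_scal g t a U J HJ)).
  assert (HL : is_RInt (fun s => L * g s) t a (L * J)) by (exact (is_RInt_scal g t a L J HJ)).
  assert (I1 : RInt psi t a <= U * J).
  { rewrite <- (is_RInt_unique _ _ _ _ HU). apply RInt_le; try lra; auto.
    eexists; eauto. intros x Hx; apply Hup; lra. }
  assert (I2 : L * J <= RInt psi t a).
  { rewrite <- (is_RInt_unique _ _ _ _ HL). apply RInt_le; try lra; auto.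
    eexists; eauto. intros x Hx; apply Hlo; lra. }
  set (A := Rpower a e). set (T := Rpower t e).
  assert (HT : 0 < T) by apply exp_pos.
  assert (HA : 0 < A) by apply exp_pos.
  assert (HAT : T < A) by (apply Rlt_Rpower_l; lra).
  assert (HJ' : J = (/T - /A) / e).
  { unfold J. rewrite !Rpower_Ropp. fold A T. field. repeat split; lra. }
  assert (Hg : g t = / T * / t).
  { unfold g, T. rewrite Rpower_Ropp, Rpower_plus, Rpower_1 by lra. rewrite Rinv_mult. ring. }
  assert (HJp : 0 < J).
  { rewrite HJ'. apply Rdiv_lt_0_compat; auto.
    apply Rlt_Rminus. apply Rinv_lt_contravar; auto. apply Rmult_lt_0_compat; auto. }
  assert (HU0 : 0 < U) by (apply Rinv_0_lt_compat, exp_pos).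
  assert (HL0 : 0 < L) by (apply Rinv_0_lt_compat, exp_pos).
  assert (Hgt : 0 < g t) by apply exp_pos.
  assert (Hc12 : Rpower (c1 / c2) q = L / U).
  { unfold Rdiv. rewrite <- Rpower_mult_distr by (try apply Rinv_0_lt_compat; lra).
    rewrite Rpower_inv_base by lra. unfold L, U. rewrite Rinv_inv. ring. }
  assert (Hc21 : Rpower (c2 / c1) q = U / L).
  { unfold Rdiv. rewrite <- Rpower_mult_distr by (try apply Rinv_0_lt_compat; lra).
    rewrite Rpower_inv_base by lra. unfold L, U. rewrite Rinv_inv. ring. }
  fold (psi t). fold psi.
  assert (Hpt1 := Hup t ltac:(lra)). assert (Hpt2 := Hlo t ltac:(lra)).
  split.
  - replace (Rpower (c1 / c2) q * e * (A / (t * (A - T)))) with ((L * g t) / (U * J)).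
    + apply div_le; split; nra.
    + rewrite Hc12, HJ', Hg. field. repeat split; lra.
  - replace (Rpower (c2 / c1) q * e * (A / (t * (A - T)))) with ((U * g t) / (L * J)).
    + apply div_le; split; nra.
    + rewrite Hc21, HJ', Hg. field. repeat split; lra.
Qed.
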